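(* In the root system $B_n$, every quartet $\{r_1, r, s, s_1\}$ is simple, i.e. if $s - r_1$ is a root then $|s - r_1| = |s|$, and if $r - r_1$ is a root then $|r - r_1| = |r|$; moreover the roots $r_1 + s_1$ and $s_1$ have the same length.
   Context: $|v|$ denotes the length of $v$ with respect to the Tits (Killing) form. Fix simple roots of $B_n$; the height of a root is the sum of its coefficients in the simple roots. The regular ordering $\prec$ of positive roots orders them by height, and roots of equal height lexicographically by coefficient vectors. An ordered pair $\{r,s\}$ of positive roots is special if $r+s\in\varPhi$ and $0\prec r\prec s$; a special pair $\{r_1,s_1\}$ is extraspecial if $r_1 \preceq r$ for every special pair $\{r,s\}$ with $r+s=r_1+s_1$. A quartet is an ordered set $\{r_1,r,s,s_1\}$ where $\{r_1,s_1\}$ is extraspecial, $\{r,s\}$ is a special, non-extraspecial pair with $r+s=r_1+s_1$, and $0\prec r_1\prec r\prec s\prec s_1$. *)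

(* Defs.v *)
(* Root system B_n, roots encoded by their coefficient
   vectors (in 'rV[int]_n) w.r.t. the simple roots
   alpha_0 = e_0 (the short simple root), alpha_k = e_k - e_{k-1} (1 <= k < n).
   (Dynkin diagram  alpha_0 => alpha_1 - ... - alpha_{n-1}.) *)
From mathcomp Require Import all_boot all_order all_algebra.
Set Implicit Arguments. Unset Strict Implicit. Unset Printing Implicit Defensive.
Import Order.TTheory GRing.Theory Num.Theory.
Local Open Scope ring_scope.

(* Orthonormal (e-basis) coordinates of  sum_i c_i alpha_i :
   coordinate k equals c_k - c_{k+1} (with c_n = 0). *)
Definition ecoord (n : nat) (c : 'rV[int]_n) (k : 'I_n) : int :=
  c 0 k - \sum_(i < n | (nat_of_ord i == (nat_of_ord k).+1)%N) c 0 i.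

Definition is_root (n : nat) (c : 'rV[int]_n) : Prop :=
  (exists i : 'I_n, ecoord c i \in [:: 1; -1] /\
      forall j : 'I_n, j != i -> ecoord c j = 0)
  \/ (exists i j : 'I_n, i != j /\ ecoord c i \in [:: 1; -1] /\
      ecoord c j \in [:: 1; -1] /\
      forall k : 'I_n, k != i -> k != j -> ecoord c k = 0).

(* squared length |c|^2 w.r.t. the invariant (Killing/Tits) form, normalised
   so that the e_i are orthonormal (lengths are compared only, so the
   normalisation is irrelevant). *)
Definition norm2 (n : nat) (c : 'rV[int]_n) : int :=
  \sum_(k < n) ecoord c k ^+ 2.

Definition pos_root (n : nat) (c : 'rV[int]_n) : Prop :=
  is_root c /\ forall i : 'I_n, 0 <= c 0 i.

Definition height (n : nat) (c : 'rV[int]_n) : int := \sum_(i < n) c 0 i.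

Definition lexlt (n : nat) (c d : 'rV[int]_n) : Prop :=
  exists k : 'I_n, (forall i : 'I_n, (i < k)%N -> c 0 i = d 0 i) /\ c 0 k < d 0 k.

Definition prec (n : nat) (c d : 'rV[int]_n) : Prop :=
  height c < height d \/ (height c = height d /\ lexlt c d).

Definition preceq (n : nat) (c d : 'rV[int]_n) : Prop := c = d \/ prec c d.

Definition special (n : nat) (r s : 'rV[int]_n) : Prop :=
  pos_root r /\ pos_root s /\ is_root (r + s) /\ prec 0 r /\ prec r s.

Definition extraspecial (n : nat) (r1 s1 : 'rV[int]_n) : Prop :=
  special r1 s1 /\
  forall r s : 'rV[int]_n, special r s -> r + s = r1 + s1 -> preceq r1 r.

Definition quartet (n : nat) (r1 r s s1 : 'rV[int]_n) : Prop :=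
  extraspecial r1 s1 /\ special r s /\ ~ extraspecial r s /\
  r + s = r1 + s1 /\
  prec 0 r1 /\ prec r1 r /\ prec r s /\ prec s s1.

(* Main.v *)
Require Import Defs.
From mathcomp Require Import all_boot all_order all_algebra zify ring.
Set Implicit Arguments. Unset Strict Implicit. Unset Printing Implicit Defensive.
Import Order.TTheory GRing.Theory Num.Theory.
Local Open Scope ring_scope.

Section Aux.
Variable n : nat.
Implicit Types c d : 'rV[int]_n.

Lemma nxt_some c (k j : 'I_n) : nat_of_ord j = (nat_of_ord k).+1 ->
  \sum_(i < n | (nat_of_ord i == (nat_of_ord k).+1)%N) c 0 i = c 0 j.
Proof.
move=> hj; rewrite (bigD1 j) ?hj ?eqxx //= big1 ?addr0 // => i /andP[/eqP hi hij].
by case/negP: hij; apply/eqP/val_inj; rewrite /= hi hj.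
Qed.

Lemma nxt_none c (k : 'I_n) : (n <= (nat_of_ord k).+1)%N ->
  \sum_(i < n | (nat_of_ord i == (nat_of_ord k).+1)%N) c 0 i = 0.
Proof.
move=> hk; rewrite big1 // => i /eqP hi; have := ltn_ord i; lia.
Qed.

Lemma ecoordD c d k : ecoord (c + d) k = ecoord c k + ecoord d k.
Proof.
rewrite /ecoord mxE (eq_bigr (fun i => c 0 i + d 0 i)) ?big_split /=; last by move=> i _; rewrite mxE.
by rewrite opprD addrACA.
Qed.

Lemma ecoordN c k : ecoord (- c) k = - ecoord c k.
Proof.
rewrite /ecoord mxE (eq_bigr (fun i => - c 0 i)) ?sumrN /=; last by move=> i _; rewrite mxE.
by rewrite opprD.
Qed.

Lemma ecoordB c d k : ecoord (c - d) k = ecoord c k - ecoord d k.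
Proof. by rewrite ecoordD ecoordN. Qed.

Lemma ecoord0_eq c : (forall k, ecoord c k = 0) -> c = 0.
Proof.
move=> h.
have key : forall m (k : 'I_n), (n <= k + m.+1)%N -> c 0 k = 0.
  elim=> [|m IH] k hk.
    have := h k; rewrite /ecoord nxt_none ?subr0 //; lia.
  case: (leqP n k.+1) => hk1.
    have := h k; rewrite /ecoord nxt_none ?subr0 //.
  have := h k; rewrite /ecoord (@nxt_some c k (Ordinal hk1)) //.
  by rewrite (IH (Ordinal hk1)) ?subr0 //=; lia.
apply/matrixP=> i k; rewrite ord1 mxE; apply: (key n); lia.
Qed.

Lemma ecoord_inj c d : (forall k, ecoord c k = ecoord d k) -> c = d.
Proof.
move=> h; apply/eqP; rewrite -subr_eq0; apply/eqP/ecoord0_eq => k.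
by rewrite ecoordB h subrr.
Qed.

Lemma heightD c d : height (c + d) = height c + height d.
Proof.
by rewrite /height -big_split; apply: eq_bigr => i _; rewrite mxE.
Qed.

Lemma heightN c : height (- c) = - height c.
Proof.
by rewrite /height -sumrN; apply: eq_bigr => i _; rewrite mxE.
Qed.

Lemma heightB c d : height (c - d) = height c - height d.
Proof. by rewrite heightD heightN. Qed.

Lemma height0 : height (0 : 'rV[int]_n) = 0.
Proof. by rewrite /height big1 // => i _; rewrite mxE. Qed.

Lemma height_ge1 c k : (forall i, 0 <= c 0 i) -> c 0 k <= height c.
Proof.
move=> h; rewrite /height (bigD1 k) //= lerDl sumr_ge0 // => i _; exact: h.
Qed.

Lemma height_ge2 c k l : (forall i, 0 <= c 0 i) -> k != l -> c 0 k + c 0 l <= height c.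
Proof.
move=> h kl; rewrite /height (bigD1 k) //= (bigD1 l) 1?eq_sym //= addrA lerDl sumr_ge0 // => i _; exact: h.
Qed.

Definition ev (a : 'I_n) : 'rV[int]_n := \row_(k < n) (if (nat_of_ord k <= a)%N then 1 else 0).
Definition un (a : 'I_n) : 'rV[int]_n := \row_(k < n) (if (nat_of_ord k == a)%N then 1 else 0).

Lemma ecoord_ev a k : ecoord (ev a) k = if (nat_of_ord k == a)%N then 1 else 0.
Proof.
rewrite /ecoord mxE.
case: (leqP n k.+1) => hk1.
  rewrite nxt_none // subr0; have := ltn_ord a; have := ltn_ord k.
  by repeat case: ifP; move=> *; lia.
rewrite (@nxt_some _ k (Ordinal hk1)) // mxE /=.
by repeat case: ifP; move=> *; lia.
Qed.

Lemma norm2_1 c : (exists i : 'I_n, ecoord c i \in [:: 1; -1] /\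
      forall j : 'I_n, j != i -> ecoord c j = 0) -> norm2 c = 1.
Proof.
case=> i [hi hj]; rewrite /norm2 (bigD1 i) //= big1 ?addr0.
  by move: hi; rewrite !inE => /orP[] /eqP ->.
by move=> j /hj ->; rewrite expr0n.
Qed.

Lemma norm2_2 c : (exists i j : 'I_n, i != j /\ ecoord c i \in [:: 1; -1] /\
      ecoord c j \in [:: 1; -1] /\
      forall k : 'I_n, k != i -> k != j -> ecoord c k = 0) -> norm2 c = 2.
Proof.
case=> i [j [ij [hi [hj hk]]]]; rewrite /norm2 (bigD1 i) //= (bigD1 j) 1?eq_sym //= big1 ?addr0.
  by move: hi hj; rewrite !inE => /orP[] /eqP -> /orP[] /eqP ->.
by move=> k /andP[ki kj]; rewrite hk // expr0n.
Qed.

Lemma norm2_root c : is_root c -> norm2 c = 1 \/ norm2 c = 2.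
Proof. by case=> h; [left; apply: norm2_1 | right; apply: norm2_2]. Qed.

Lemma norm2D c d : exists z, norm2 (c + d) = norm2 c + norm2 d + 2 * z.
Proof.
exists (\sum_k ecoord c k * ecoord d k).
rewrite /norm2 mulr_sumr -!big_split /=; apply: eq_bigr => k _.
rewrite ecoordD; ring.
Qed.

Lemma root_entry c k : is_root c -> ecoord c k = 0 \/ ecoord c k = 1 \/ ecoord c k = -1.
Proof.
case=> [[i [hi hj]]|[i [j [ij [hi [hj hk]]]]]].
  case: (eqVneq k i) => [->|/hj ->]; last by left.
  by move: hi; rewrite !inE => /orP[] /eqP ->; auto.
case: (eqVneq k i) => [->|ki].
  by move: hi; rewrite !inE => /orP[] /eqP ->; auto.
case: (eqVneq k j) => [->|kj]; last by left; apply: hk.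
by move: hj; rewrite !inE => /orP[] /eqP ->; auto.
Qed.

Lemma root_three c (a b d : 'I_n) : is_root c -> a != b -> a != d -> b != d ->
  ecoord c a = 0 \/ ecoord c b = 0 \/ ecoord c d = 0.
Proof.
move=> + ab ad bd.
case=> [[i [hi hj]]|[i [j [ij [hi [hj hk]]]]]].
  case: (eqVneq a i) => [ai|/hj]; last by left.
  by subst; right; left; apply: hj; rewrite eq_sym.
have [ai|ai] := eqVneq a i; have [aj|aj] := eqVneq a j;
have [bi|bi] := eqVneq b i; have [bj|bj] := eqVneq b j;
have [di|di] := eqVneq d i; have [dj|dj] := eqVneq d j; subst;
rewrite ?eqxx in ab ad bd ij |- *; try done;
by [left; apply: hk | right; left; apply: hk | right; right; apply: hk].
Qed.

End Aux.

Ltac neq := apply/eqP => /(f_equal (@nat_of_ord _)) /=; lia.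
Ltac mxcase := apply/matrixP => ? ?; rewrite !mxE /=; repeat case: ifP; move=> *; lia.

Section Main.
Variable n : nat.
Implicit Types c d : 'rV[int]_n.+1.

Lemma ev_nonneg (a : 'I_n.+1) i : 0 <= ev a 0 i.
Proof. by rewrite mxE; case: ifP. Qed.

Lemma pos_ev (a : 'I_n.+1) : pos_root (ev a).
Proof.
split; last exact: ev_nonneg.
left; exists a; split; first by rewrite ecoord_ev eqxx inE.
by move=> j ja; rewrite ecoord_ev; case: ifP => // /eqP h; case/eqP: ja; apply: val_inj.
Qed.

Lemma pos_ev2 (a b : 'I_n.+1) : a != b -> pos_root (ev a + ev b).
Proof.
move=> ab; split; last by move=> i; rewrite mxE addr_ge0 // ev_nonneg.
right; exists a, b; split => //.
have hab : (nat_of_ord a == b) = false by apply/negbTE.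
split; first by rewrite ecoordD !ecoord_ev eqxx hab inE.
split; first by rewrite ecoordD !ecoord_ev eqxx eq_sym hab inE.
move=> k ka kb; rewrite ecoordD !ecoord_ev.
have -> : (nat_of_ord k == a) = false by apply/negbTE.
by have -> : (nat_of_ord k == b) = false by apply/negbTE.
Qed.

Lemma un_ev (a b : 'I_n.+1) : nat_of_ord b = (nat_of_ord a).+1 -> un b = ev b - ev a.
Proof. move=> hb; mxcase. Qed.

Lemma pos_un (a b : 'I_n.+1) : nat_of_ord b = (nat_of_ord a).+1 -> pos_root (un b).
Proof.
move=> hb; split; last by move=> i; rewrite mxE; case: ifP.
rewrite (un_ev hb).
right; exists b, a; split; first by neq.
split; first by rewrite ecoordB !ecoord_ev eqxx hb; case: ifP => *; try lia; rewrite inE.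
split; first by rewrite ecoordB !ecoord_ev eqxx hb; case: ifP => *; try lia; rewrite inE.
move=> k kb ka; rewrite ecoordB !ecoord_ev.
have -> : (nat_of_ord k == a) = false by apply/negbTE.
by have -> : (nat_of_ord k == b) = false by apply/negbTE.
Qed.

Lemma height_un (b : 'I_n.+1) : height (un b) = 1.
Proof.
rewrite /height (bigD1 b) //= big1 ?addr0; first by rewrite mxE eqxx.
by move=> i ib; rewrite mxE; case: ifP => // /eqP h; case/eqP: ib; apply: val_inj.
Qed.

Lemma prec_lex c d : height c <= height d -> c 0 ord0 < d 0 ord0 -> prec c d.
Proof.
rewrite le_eqVlt => /orP[/eqP h|h] h0; last by left.
by right; split => //; exists ord0; split.
Qed.

Lemma prec_le c d : prec c d -> height c <= height d.
Proof. by case=> [/ltW|[-> _]]. Qed.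

Lemma mk_special (a b : 'I_n.+1) s' : nat_of_ord b = (nat_of_ord a).+1 ->
  pos_root s' -> 1 <= s' 0 ord0 -> is_root (un b + s') -> special (un b) s'.
Proof.
move=> hb ps h0 rt; split; first exact: pos_un hb.
split => //; split => //; split.
  by left; rewrite height0 height_un.
apply: prec_lex.
  by rewrite height_un; apply: le_trans h0 _; apply: height_ge1; case: ps.
by rewrite mxE /= hb /=; lia.
Qed.

Lemma no_ext (r1 s1 r' s' : 'rV[int]_n.+1) : extraspecial r1 s1 -> r1 0 ord0 = 1 -> special r' s' ->
  r' + s' = r1 + s1 -> r' 0 ord0 = 0 -> height r' <= height r1 -> False.
Proof.
move=> [_ hext] h1 sp e h0 hh.
case: (hext r' s' sp e) => [e'|[hlt|[_ [k [hk hlt]]]]].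
- by move: h1; rewrite e' h0.
- by have := lt_le_trans hlt hh; rewrite ltxx.
case: (posnP k) => [k0|kpos].
  have e0 : k = ord0 by apply: val_inj.
  subst k.
  by move: hlt; rewrite h1 h0.
by move: (hk ord0 kpos); rewrite h1 h0.
Qed.

Lemma pred_ord (i : 'I_n.+1) : (0 < i)%N -> exists a : 'I_n.+1, nat_of_ord i = (nat_of_ord a).+1.
Proof. case: i => [[|m] hm] //= _; exists (inord m); rewrite inordK //; lia. Qed.

Lemma short_pos c : (forall i, 0 <= c 0 i) ->
  (exists i : 'I_n.+1, ecoord c i \in [:: 1; -1] /\
      forall j : 'I_n.+1, j != i -> ecoord c j = 0) -> exists i, c = ev i.
Proof.
move=> nn [i [hi hj]].
have hE : forall k, ecoord c k = if (nat_of_ord k == i) then ecoord c i else 0.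
  move=> k; case: ifP => [/eqP h|h]; first by have -> : k = i by apply: val_inj.
  by apply: hj; apply/negP => /eqP e; subst; rewrite eqxx in h.
move: hi; rewrite !inE => /orP[] /eqP hi.
  exists i; apply: ecoord_inj => k; rewrite hE hi ecoord_ev; done.
have : c = - ev i.
  by apply: ecoord_inj => k; rewrite hE hi ecoordN ecoord_ev; case: ifP.
move=> ec; have := nn i; rewrite ec !mxE leqnn; done.
Qed.

Lemma two_pos c (i j : 'I_n.+1) : (forall k, 0 <= c 0 k) -> (i < j)%N ->
  ecoord c i \in [:: 1; -1] -> ecoord c j \in [:: 1; -1] ->
  (forall k : 'I_n.+1, k != i -> k != j -> ecoord c k = 0) ->
  c = ev j + ev i \/ c = ev j - ev i.
Proof.
move=> nn ij hi hj hk.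
have hE : forall k, ecoord c k = (if (nat_of_ord k == i) then ecoord c i else 0)
   + (if (nat_of_ord k == j) then ecoord c j else 0).
  move=> k; case: ifP => [/eqP h|h].
    have -> : k = i by apply: val_inj.
    by case: ifP => [/eqP|]; [lia | rewrite addr0].
  case: ifP => [/eqP h'|h'].
    have e : k = j by apply: val_inj.
    by rewrite e add0r.
  by rewrite add0r; apply: hk; apply/negP => /eqP e; subst; rewrite eqxx in h h'.
move: hi hj; rewrite !inE => /orP[] /eqP hi /orP[] /eqP hj.
- left; apply: ecoord_inj => k; rewrite hE hi hj ecoordD !ecoord_ev.
  by repeat case: ifP; move=> *; lia.
- have ec : c = ev i - ev j.
    by apply: ecoord_inj => k; rewrite hE hi hj ecoordB !ecoord_ev; repeat case: ifP; move=> *; lia.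
  by have := nn j; rewrite ec !mxE; repeat case: ifP; move=> *; lia.
- right; apply: ecoord_inj => k; rewrite hE hi hj ecoordB !ecoord_ev.
  by repeat case: ifP; move=> *; lia.
- have ec : c = - ev i - ev j.
    by apply: ecoord_inj => k; rewrite hE hi hj !ecoordB ecoordN !ecoord_ev; repeat case: ifP; move=> *; lia.
  by have := nn j; rewrite ec !mxE; repeat case: ifP; move=> *; lia.
Qed.

Lemma pos_class c : pos_root c -> (exists i, c = ev i) \/
  exists a b : 'I_n.+1, (a < b)%N /\ (c = ev b + ev a \/ c = ev b - ev a).
Proof.
case=> [[h|[i [j [ij [hi [hj hk]]]]]] nn]; first by left; apply: short_pos.
right; case: (ltngtP i j) => [lt|gt|e].
- by exists i, j; split => //; apply: two_pos.
- by exists j, i; split => //; apply: two_pos => // k ? ?; apply: hk.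
- by case/eqP: ij; apply: val_inj.
Qed.

End Main.

Section Final.
Variable n : nat.

Lemma e0e1 (b : 'I_n.+1) (r1 r s s1 : 'rV[int]_n.+1) : nat_of_ord b = 1%N ->
  r1 = ev ord0 -> s1 = ev b -> quartet r1 r s s1 -> False.
Proof.
move=> hb e1 e2 [ext [sp [nex [e [p0 [p1 [p2 p3]]]]]]].
have h1 : height r1 = 1.
  by rewrite e1 -(height_un (ord0 : 'I_n.+1)); congr height; mxcase.
have h2 : height s1 = 2.
  have -> : s1 = un b + ev ord0 by rewrite e2; mxcase.
  by rewrite heightD height_un -e1 h1.
have hsum : height r + height s = 3 by rewrite -heightD e heightD h1 h2.
have hrs := prec_le p2.
case: sp => [[_ nnr] [[_ nns] _]].
case: p1 => [hlt|[heq [k [hk hlt]]]].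
  lia.
case: (posnP k) => [k0|kpos].
  have e0 : k = ord0 by apply: val_inj.
  subst k; have := height_ge1 (ord0 : 'I_n.+1) nnr.
  move: hlt; rewrite e1 mxE /=; lia.
have := hk ord0 kpos; rewrite e1 mxE /= => hr0.
have kn : (ord0 : 'I_n.+1) != k by neq.
have := height_ge2 nnr kn.
move: hlt; rewrite e1 mxE.
case: ifP => [/= ?|_]; lia.
Qed.

Ltac ecalc := rewrite !(ecoordD, ecoordN, ecoord_ev); repeat case: ifP; move=> *; lia.

Lemma sum3_bad (i a b : 'I_n.+1) : is_root (ev i + (ev b + ev a)) -> (a < b)%N -> False.
Proof.
move=> rt ab.
have [ia|ia] := eqVneq (nat_of_ord i) a; first by have := root_entry i rt; ecalc.
have [ib|ib] := eqVneq (nat_of_ord i) b; first by have := root_entry i rt; ecalc.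
have h1 : i != a by neq.
have h2 : i != b by neq.
have h3 : a != b by neq.
have := @root_three _ _ i a b rt h1 h2 h3; ecalc.
Qed.

Lemma diff3_bad (i a b : 'I_n.+1) : is_root (ev i + (ev b - ev a)) -> (a < b)%N ->
  nat_of_ord i != a -> False.
Proof.
move=> rt ab ia.
have [ib|ib] := eqVneq (nat_of_ord i) b; first by have := root_entry i rt; ecalc.
have h1 : i != a by neq.
have h2 : i != b by neq.
have h3 : a != b by neq.
have := @root_three _ _ i a b rt h1 h2 h3; ecalc.
Qed.

Lemma r1_long (r1 r s s1 : 'rV[int]_n.+1) : quartet r1 r s s1 -> norm2 r1 = 2.
Proof.
move=> q; have ext := proj1 q; have q' := q.
move: q' => [[sp1 hext] [sp [nex [e [p0 [p1 [p2 p3]]]]]]].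
case: (sp1) => [[[short|long] nn1] [ps1 [rt [_ p11]]]]; last exact: norm2_2.
exfalso.
have [i ei] := short_pos nn1 short; subst r1.
have hr10 : ev i 0 ord0 = 1 by rewrite mxE.
have hr1h : 1 <= height (ev i) by rewrite -hr10; apply: height_ge1; exact: ev_nonneg.
case: (pos_class ps1) => [[j ej]|[a [b [ab [ej|ej]]]]]; subst s1.
- case: (ltngtP j i) => [ji|ij|ji].
  + have hle := prec_le p11.
    have nn : forall k, 0 <= (ev i - ev j) 0 k.
      by move=> k; rewrite !mxE; repeat case: ifP; move=> *; lia.
    have := height_ge1 i nn; rewrite heightB !mxE; repeat case: ifP; move=> *; lia.
  + case: (eqVneq (nat_of_ord j) i.+1) => [ji|ji].
      case: (posnP i) => [i0|ipos].
        have i0' : i = ord0 by apply: val_inj.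
        subst i; apply: (e0e1 (b := j)) q => //; lia.
      have [a ha] := pred_ord ipos.
      apply: (no_ext ext hr10 (r' := un i) (s' := ev j + ev a)).
      + apply: (mk_special ha); first by apply: pos_ev2; neq.
          by rewrite !mxE /=.
        have -> : un i + (ev j + ev a) = ev i + ev j by mxcase.
        exact: rt.
      + by mxcase.
      + by rewrite mxE /= ha.
      + by rewrite height_un.
    have jpos : (0 < j)%N by lia.
    have [a ha] := pred_ord jpos.
    apply: (no_ext ext hr10 (r' := un j) (s' := ev i + ev a)).
    + apply: (mk_special ha); first by apply: pos_ev2; neq.
        by rewrite !mxE /=.
      have -> : un j + (ev i + ev a) = ev i + ev j by mxcase.
      exact: rt.
    + by mxcase.
    + by rewrite mxE /= ha.
    + by rewrite height_un.
  + have := root_entry i rt; ecalc.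
- exact: sum3_bad rt ab.
- have [ia|ia] := eqVneq (nat_of_ord i) a.
    have bpos : (0 < b)%N by lia.
    have [a' ha] := pred_ord bpos.
    apply: (no_ext ext hr10 (r' := un b) (s' := ev a')).
    + apply: (mk_special ha); first exact: pos_ev.
        by rewrite !mxE /=.
      have -> : un b + ev a' = ev i + (ev b - ev a) by mxcase.
      exact: rt.
    + by mxcase.
    + by rewrite mxE /= ha.
    + by rewrite height_un.
  exact: diff3_bad rt ab ia.
Qed.

End Final.

Theorem mainTheorem4 (n : nat) (r1 r s s1 : 'rV[int]_n) :
  quartet r1 r s s1 ->
  (is_root (s - r1) -> norm2 (s - r1) = norm2 s) /\
  (is_root (r - r1) -> norm2 (r - r1) = norm2 r) /\
  norm2 (r1 + s1) = norm2 s1.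
Proof.
case: n r1 r s s1 => [|n] r1 r s s1 q.
  case: q => [[[[[[i _]|[i _]] _] _] _] _]; by case: i.
have h2 := r1_long q.
case: q => [[[_ [[rs1 _] [rt _]]] _] [[[rr _] [[rs _] _]] _]].
have key : forall x, is_root x -> is_root (x + r1) -> norm2 x = norm2 (x + r1).
  move=> x hx hxr; have [z hz] := norm2D x r1.
  have := norm2_root hx; have := norm2_root hxr; rewrite hz h2; lia.
split; [|split].
- by move=> h; rewrite (key _ h) ?subrK.
- by move=> h; rewrite (key _ h) ?subrK.
- by rewrite addrC -key // addrC.
Qed.
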